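(* Fix an integer $k\ge 1$. For $m\ge k$ let $w(m)$ be the maximal weight of a seed of span at most $m$ that solves the (linear) $(m,k)$-problem. Then $m-w(m)=\Theta\!\left(m^{\frac{k}{k+1}}\right)$ as $m\to\infty$.
   Context: A seed is a finite word over $\{\#,-\}$ ($-$ is called a joker); its span is its length and its weight its number of $\#$'s. A binary word is an $(m,k)$-similarity if it has length $m$ and exactly $k$ zeros. A seed $Q$ matches a binary word $w$ at position $j$ ($1\le j\le |w|-s(Q)+1$) if $w[j+t-1]=1$ for every $t$ with $Q[t]=\#$, and detects $w$ if it matches at some position. $Q$ solves the $(m,k)$-problem if it detects every $(m,k)$-similarity. *)

(* Defs.v *)
From Stdlib Require Import Reals List Arith ClassicalEpsilon.
Import ListNotations.

(* A seed: true = '#', false = '-' (joker). *)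
Definition seed := list bool.
Definition span (Q : seed) : nat := length Q.
Definition weight (Q : seed) : nat := length (filter (fun b => b) Q).

(* Binary words: true = 1, false = 0. *)
Definition word := list bool.
Definition zeros (w : word) : nat := length (filter negb w).

Definition similarity (m k : nat) (w : word) : Prop :=
  length w = m /\ zeros w = k.

(* 1-indexed positions as in the paper: Q matches w at position j
   (1 <= j <= |w| - s(Q) + 1) iff w[j+t-1] = 1 for every t with Q[t] = '#'.
   List indices are 0-based, so Q[t] is nth (t-1) and w[j+t-1] is nth (j+t-2). *)
Definition matches_at (Q : seed) (w : word) (j : nat) : Prop :=
  (1 <= j)%nat /\ (j + span Q <= length w + 1)%nat /\
  forall t : nat, (1 <= t <= span Q)%nat ->
    nth (t - 1) Q false = true -> nth (j + t - 2) w false = true.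

Definition detects (Q : seed) (w : word) : Prop := exists j, matches_at Q w j.

Definition solves (Q : seed) (m k : nat) : Prop :=
  forall w : word, similarity m k w -> detects Q w.

Definition is_max_solving_weight (k m n : nat) : Prop :=
  (exists Q : seed, (span Q <= m)%nat /\ solves Q m k /\ weight Q = n) /\
  (forall Q : seed, (span Q <= m)%nat -> solves Q m k -> (weight Q <= n)%nat).

(* w(m) (for fixed k): the maximum above (it exists and is unique; chosen by epsilon). *)
Definition wmax (k m : nat) : nat :=
  epsilon (inhabits 0%nat) (is_max_solving_weight k m).

(* Main.v *)
Require Import Defs.
From Stdlib Require Import Reals List Arith Lia ClassicalEpsilon Classical Lra.
Import ListNotations.
Open Scope nat_scope.
Open Scope bool_scope.

Definition cnt (p : nat -> bool) (l : list nat) := length (filter p l).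

Lemma cnt_app p l1 l2 : cnt p (l1 ++ l2) = cnt p l1 + cnt p l2.
Proof. unfold cnt; rewrite filter_app, length_app; reflexivity. Qed.

Lemma filter_len_le {A} (p : A -> bool) l : length (filter p l) <= length l.
Proof. induction l; simpl; [lia|]. destruct (p a); simpl; lia. Qed.

Lemma filter_split {A} (p : A -> bool) l :
  length (filter p l) + length (filter (fun x => negb (p x)) l) = length l.
Proof. induction l; simpl; [lia|]. destruct (p a); simpl; lia. Qed.

Lemma cnt_ext p q l : (forall x, In x l -> p x = q x) -> cnt p l = cnt q l.
Proof. intros H; unfold cnt; rewrite (filter_ext_in _ _ _ H); reflexivity. Qed.

Lemma cnt_shift p : forall len start n,
  cnt p (seq (start + n) len) = cnt (fun x => p (x + n)) (seq start len).
Proof.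
  unfold cnt; induction len; intros; simpl; [reflexivity|].
  replace (S (start + n)) with (S start + n) by lia.
  specialize (IHlen (S start) n). unfold cnt in IHlen.
  destruct (p (start + n)); simpl; simpl in IHlen; rewrite IHlen; reflexivity.
Qed.

Lemma cnt_seq_app p a b c : cnt p (seq a (b + c)) = cnt p (seq a b) + cnt p (seq (a + b) c).
Proof. rewrite seq_app, cnt_app; reflexivity. Qed.

Lemma cnt_mono p a n : a <= n -> cnt p (seq 0 a) <= cnt p (seq 0 n).
Proof. intros H. replace n with (a + (n - a)) by lia. rewrite cnt_seq_app; lia. Qed.

Lemma cnt_sub p a b m : a + b <= m -> cnt p (seq a b) <= cnt p (seq 0 m).
Proof.
  intros H. replace m with (a + b + (m - (a + b))) by lia.
  rewrite cnt_seq_app. pose proof (cnt_seq_app p 0 a b) as E. simpl in E. lia.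
Qed.

Lemma cnt_all_true p l : (forall x, In x l -> p x = true) -> cnt p l = length l.
Proof. unfold cnt; induction l; intros H; simpl; auto.
  rewrite H by (left; auto). simpl. rewrite IHl; auto. intros; apply H; right; auto. Qed.

Lemma cnt_all_false p l : (forall x, In x l -> p x = false) -> cnt p l = 0.
Proof. unfold cnt; induction l; intros H; simpl; auto.
  rewrite H by (left; auto). apply IHl; intros; apply H; right; auto. Qed.

Lemma cnt_or p q l : cnt (fun x => p x || q x) l <= cnt p l + cnt q l.
Proof. unfold cnt; induction l; simpl; [lia|]. destruct (p a), (q a); simpl; lia. Qed.

Lemma cnt_nth_gen (f : bool -> bool) def : forall (w : list bool) a,
  cnt (fun i => f (nth (i - a) w def)) (seq a (length w)) = length (filter f w).
Proof.
  unfold cnt; induction w; intros; simpl; auto.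
  rewrite Nat.sub_diag.
  rewrite (filter_ext_in (fun i => f (nth (i - a0) (a :: w) def)) (fun i => f (nth (i - S a0) w def))).
  - destruct (f a); simpl; rewrite IHw; auto.
  - intros x Hx. apply in_seq in Hx. replace (x - a0) with (S (x - S a0)) by lia. reflexivity.
Qed.

Lemma cnt_periodic f p : (forall x, f (x + p) = f x) ->
  forall a, cnt f (seq 0 (a * p)) = a * cnt f (seq 0 p).
Proof.
  intros Hp; induction a; simpl; [reflexivity|].
  rewrite cnt_seq_app. simpl. replace p with (0 + p) at 2 by lia.
  rewrite cnt_shift. rewrite (cnt_ext (fun x => f (x + p)) f) by (intros; apply Hp).
  rewrite IHa. lia.
Qed.

Lemma cnt_mod_base p q : q <= p -> cnt (fun x => x mod p <? q) (seq 0 p) = q.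
Proof.
  intros H. assert (E : seq 0 p = seq 0 (q + (p - q))) by (f_equal; lia).
  rewrite E, cnt_seq_app.
  rewrite cnt_all_true, cnt_all_false.
  - rewrite length_seq; lia.
  - intros x Hx; apply in_seq in Hx. rewrite Nat.mod_small by lia. apply Nat.ltb_ge; lia.
  - intros x Hx; apply in_seq in Hx. rewrite Nat.mod_small by lia. apply Nat.ltb_lt; lia.
Qed.

Lemma cnt_mod_bound t i s : 1 <= t ->
  t * cnt (fun x => x mod t ^ (S i) <? t ^ i) (seq 0 s) <= s + t ^ (S i).
Proof.
  intros Ht. set (p := t ^ S i). set (q := t ^ i).
  assert (Hq : 1 <= q) by (apply Nat.pow_le_mono_l with (c:=i) in Ht; rewrite Nat.pow_1_l in Ht; exact Ht).
  assert (Hpq : p = t * q) by reflexivity.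
  assert (Hp0 : p <> 0) by nia.
  assert (Hs : s <= (s / p + 1) * p).
  { pose proof (Nat.div_mod s p Hp0). pose proof (Nat.mod_upper_bound s p Hp0). nia. }
  pose proof (cnt_mono (fun x => x mod p <? q) _ _ Hs) as H1.
  rewrite cnt_periodic in H1.
  - rewrite cnt_mod_base in H1 by nia.
    pose proof (Nat.Div0.mul_div_le s p). nia.
  - intros x. replace (x + p) with (x + 1 * p) by lia. rewrite Nat.Div0.mod_add. reflexivity.
Qed.
Open Scope nat_scope.
Open Scope bool_scope.

Fixpoint jok (t k x : nat) : bool :=
  match k with 0 => false | S k' => (x mod t ^ (S k') <? t ^ k') || jok t k' x end.

Lemma pow_pos t n : 1 <= t -> 1 <= t ^ n.
Proof. intros H. apply Nat.pow_le_mono_l with (c:=n) in H. rewrite Nat.pow_1_l in H. exact H. Qed.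

Lemma jok_shift t k : forall i x c, i <= k -> jok t i (x + c * t ^ k) = jok t i x.
Proof.
  induction i; intros x c Hi; simpl; auto.
  rewrite IHi by lia. f_equal. f_equal.
  replace (t ^ k) with (t ^ (k - S i) * t ^ (S i)).
  - rewrite Nat.mul_assoc, Nat.Div0.mod_add. reflexivity.
  - rewrite <- Nat.pow_add_r. f_equal. lia.
Qed.

Lemma cover_con t (ht : 1 <= t) : forall k (Zs : list nat), length Zs <= k ->
  exists d, d < t ^ k /\ forall z, In z Zs -> d <= z -> jok t k (z - d) = true.
Proof.
  induction k; intros Zs HL.
  - exists 0. split; [simpl; lia|]. destruct Zs; simpl in *; [tauto|lia].
  - destruct Zs as [|z Zs'].
    + exists 0. split; [pose proof (pow_pos t (S k) ht); lia| simpl; tauto].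
    + simpl in HL. destruct (IHk Zs') as [d' [Hd' Hz']]; [lia|].
      pose proof (pow_pos t k ht) as Htk.
      set (Tk := t ^ k) in *.
      assert (HT1 : t ^ S k = t * Tk) by reflexivity.
      set (r := (z - d') mod t ^ S k).
      set (c := if d' <=? z then r / Tk else 0).
      assert (Hc : c < t).
      { unfold c. destruct (d' <=? z); [|lia]. apply Nat.Div0.div_lt_upper_bound.
        unfold r. rewrite HT1. rewrite Nat.mul_comm. apply Nat.mod_upper_bound. nia. }
      exists (d' + c * Tk). split.
      { rewrite HT1. nia. }
      intros y Hy Hle. simpl. destruct Hy as [Hy|Hy].
      * subst y. apply Bool.orb_true_iff; left. apply Nat.ltb_lt.
        assert (Hdz : d' <= z) by lia.
        unfold c in *. apply Nat.leb_le in Hdz as Hdz'. rewrite Hdz' in *.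
        pose proof (Nat.div_mod_eq (z - d') (t ^ S k)) as E1.
        fold r in E1.
        pose proof (Nat.div_mod_eq r Tk) as E2.
        pose proof (Nat.mod_upper_bound r Tk ltac:(lia)) as E3.
        change (t * t ^ k) with (t ^ S k). fold Tk. replace (z - (d' + r / Tk * Tk)) with (r mod Tk + ((z - d') / t ^ S k) * t ^ S k) by nia.
        rewrite Nat.Div0.mod_add. rewrite Nat.mod_small; [lia|]. rewrite HT1. nia.
      * apply Bool.orb_true_iff; right.
        replace (y - (d' + c * Tk)) with ((y - d') - c * Tk) by lia.
        assert (Hy2 : y - d' = (y - d' - c * Tk) + c * Tk) by lia.
        pose proof (jok_shift t k k (y - d' - c * Tk) c (le_n k)) as J.
        fold Tk in J. rewrite <- Hy2 in J. rewrite <- J. apply Hz'; auto. lia.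
Qed.

Lemma jok_bound t (ht : 1 <= t) s : forall k, t * cnt (jok t k) (seq 0 s) <= k * (s + t ^ k).
Proof.
  induction k; simpl.
  - rewrite cnt_all_false; auto. lia.
  - pose proof (cnt_or (fun x => x mod t ^ S k <? t ^ k) (jok t k) (seq 0 s)).
    pose proof (cnt_mod_bound t k s ht).
    assert (t ^ k <= t * t ^ k) by nia.
    simpl in *. nia.
Qed.

Lemma weight_map h l : length (filter (fun b : bool => b) (map h l)) = cnt h l.
Proof. unfold cnt; induction l; simpl; auto. destruct (h a); simpl; auto. Qed.

Lemma zero_positions (w : word) :
  length (filter (fun i => negb (nth i w true)) (seq 0 (length w))) = zeros w.
Proof.
  pose proof (cnt_nth_gen negb true w 0) as H. unfold cnt in H.
  unfold zeros. rewrite <- H. f_equal. apply filter_ext. intros. rewrite Nat.sub_0_r. reflexivity.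
Qed.

Lemma upper_con k m t : 1 <= k -> 1 <= t -> t ^ k <= m ->
  exists Q, span Q <= m /\ solves Q m k /\ weight Q <= m /\
    t * (m - weight Q) <= t * t ^ k + k * (m + t ^ k).
Proof.
  intros Hk Ht Htk.
  set (s := m + 1 - t ^ k).
  set (h := fun x => negb (jok t k x)).
  exists (map h (seq 0 s)).
  assert (Hsp : span (map h (seq 0 s)) = s) by (unfold span; rewrite length_map, length_seq; auto).
  assert (Hw : weight (map h (seq 0 s)) + cnt (jok t k) (seq 0 s) = s).
  { unfold weight. rewrite weight_map. unfold cnt, h.
    rewrite Nat.add_comm. rewrite <- (length_seq s 0) at 3. apply filter_split. }
  pose proof (jok_bound t Ht s k) as Hjb.
  pose proof (pow_pos t k Ht) as Hp.
  split; [rewrite Hsp; unfold s; lia|].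
  split; [|split; [lia|nia]].
  intros w [Hlen Hz].
  set (Zs := filter (fun i => negb (nth i w true)) (seq 0 m)).
  assert (HZ : length Zs = k) by (unfold Zs; rewrite <- Hlen, zero_positions; auto).
  destruct (cover_con t Ht k Zs ltac:(lia)) as [d [Hd Hcov]].
  exists (d + 1). unfold matches_at. rewrite Hsp.
  split; [lia|]. split; [unfold s; lia|].
  intros tt Htt HQ.
  rewrite nth_indep with (d' := h 0) in HQ by (rewrite length_map, length_seq; lia).
  rewrite map_nth, seq_nth in HQ by lia. simpl in HQ.
  replace (d + 1 + tt - 2) with (d + tt - 1) by lia.
  destruct (nth (d + tt - 1) w false) eqn:E; auto.
  exfalso.
  assert (HIn : In (d + tt - 1) Zs).
  { unfold Zs. apply filter_In. split; [apply in_seq; unfold s in *; lia|].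
    rewrite nth_indep with (d' := false) by lia. rewrite E. reflexivity. }
  specialize (Hcov _ HIn ltac:(lia)).
  replace (d + tt - 1 - d) with (tt - 1) in Hcov by lia.
  unfold h in HQ. rewrite Hcov in HQ. discriminate.
Qed.
Open Scope nat_scope.
Open Scope bool_scope.

Lemma sum_plus {A} (f g : A -> nat) D :
  list_sum (map (fun d => f d + g d) D) = list_sum (map f D) + list_sum (map g D).
Proof. induction D; simpl; lia. Qed.

Lemma sum_zero {A} (f : A -> nat) D : (forall d, f d = 0) -> list_sum (map f D) = 0.
Proof. intros H; induction D; simpl; auto. rewrite H, IHD; auto. Qed.

Lemma sum_filter {A} (G : A -> nat) p D :
  list_sum (map G (filter p D)) = list_sum (map (fun d => if p d then G d else 0) D).
Proof. induction D; simpl; auto. destruct (p a); simpl; lia. Qed.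

Lemma sum_const_le {A} (F : A -> nat) c D : (forall d, In d D -> F d <= c) ->
  list_sum (map F D) <= length D * c.
Proof. induction D; intros H; simpl; auto.
  assert (F a <= c) by (apply H; left; auto).
  assert (list_sum (map F D) <= length D * c) by (apply IHD; intros; apply H; right; auto). lia. Qed.

Lemma sum_member {A} (F : A -> nat) d D : In d D -> F d <= list_sum (map F D).
Proof. induction D; simpl; intros H; [tauto|]. destruct H; subst; [lia|]. specialize (IHD H); lia. Qed.

Lemma sum_mono {A} (F G : A -> nat) D : (forall d, In d D -> F d <= G d) ->
  list_sum (map F D) <= list_sum (map G D).
Proof. induction D; intros H; simpl; auto.
  assert (F a <= G a) by (apply H; left; auto).
  assert (list_sum (map F D) <= list_sum (map G D)) by (apply IHD; intros; apply H; right; auto). lia. Qed.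

Lemma sum_const {A} c (B : list A) : list_sum (map (fun _ => c) B) = length B * c.
Proof. induction B; simpl; lia. Qed.

Lemma exch (U : nat -> nat -> bool) (G : nat -> nat) D : forall B : list nat,
  list_sum (map (fun o => list_sum (map G (filter (fun d => U d o) D))) B) =
  list_sum (map (fun d => length (filter (fun o => U d o) B) * G d) D).
Proof.
  induction B as [|o B IH]; simpl.
  - rewrite sum_zero; auto.
  - rewrite IH, sum_filter.
    rewrite <- sum_plus. f_equal. apply map_ext. intros d. destruct (U d o); simpl; lia.
Qed.

Fixpoint prodF (U : nat -> nat -> nat -> bool) (b lvl n d : nat) : nat :=
  match n with
  | 0 => 1
  | S n' => length (filter (U lvl d) (seq 0 b)) * prodF U b (S lvl) n' d
  end.

Lemma cover_count U b : forall n lvl (D : list nat),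
  (forall os, length os = n -> (forall o, In o os -> o < b) ->
     exists d, In d D /\ forall j, j < n -> U (lvl + j) d (nth j os 0) = true) ->
  b ^ n <= list_sum (map (prodF U b lvl n) D).
Proof.
  induction n; intros lvl D H.
  - destruct (H [] eq_refl ltac:(simpl; tauto)) as [d [Hd _]].
    pose proof (sum_member (prodF U b lvl 0) d D Hd). simpl in *. lia.
  - assert (Hstep : forall o, In o (seq 0 b) ->
      b ^ n <= list_sum (map (prodF U b (S lvl) n) (filter (fun d => U lvl d o) D))).
    { intros o Ho. apply in_seq in Ho. apply IHn. intros os Hl Hb.
      destruct (H (o :: os)) as [d [Hd Hj]].
      - simpl; lia.
      - intros x [Hx|Hx]; [lia|auto].
      - exists d. split.
        + apply filter_In. split; auto. specialize (Hj 0 ltac:(lia)). rewrite Nat.add_0_r in Hj. exact Hj.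
        + intros j Hjn. specialize (Hj (S j) ltac:(lia)). replace (S lvl + j) with (lvl + S j) by lia. exact Hj. }
    pose proof (sum_mono _ _ _ Hstep) as H2.
    rewrite sum_const, length_seq in H2.
    rewrite exch in H2. simpl. 
    replace (b * b ^ n) with (b * b ^ n) by reflexivity. 
    eapply Nat.le_trans; [apply H2|]. apply Nat.eq_le_incl. reflexivity.
Qed.

Lemma prodF_le U b e d : forall n lvl, (forall j, j < n -> length (filter (U (lvl + j) d) (seq 0 b)) <= e) ->
  prodF U b lvl n d <= e ^ n.
Proof.
  induction n; intros lvl H; simpl; auto.
  apply Nat.mul_le_mono.
  - specialize (H 0 ltac:(lia)). rewrite Nat.add_0_r in H; auto.
  - apply IHn. intros j Hj. replace (S lvl + j) with (lvl + S j) by lia. apply H; lia.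
Qed.

Fixpoint W (b r : nat) (os : list nat) : list bool :=
  match os with
  | [] => repeat true r
  | o :: os' => repeat true o ++ false :: repeat true (b - 1 - o) ++ W b r os'
  end.

Lemma W_len b r : forall os, (forall o, In o os -> o < b) -> length (W b r os) = length os * b + r.
Proof.
  induction os as [|o os IH]; intros H; simpl.
  - apply repeat_length.
  - rewrite length_app. simpl. rewrite length_app, !repeat_length, IH by (intros; apply H; right; auto).
    assert (o < b) by (apply H; left; auto). lia.
Qed.

Lemma zeros_app (l1 l2 : list bool) : zeros (l1 ++ l2) = zeros l1 + zeros l2.
Proof. unfold zeros; rewrite filter_app, length_app; auto. Qed.

Lemma zeros_rep n : zeros (repeat true n) = 0.
Proof. induction n; auto. Qed.

Lemma W_zeros b r : forall os, zeros (W b r os) = length os.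
Proof.
  induction os as [|o os IH]; simpl.
  - apply zeros_rep.
  - rewrite zeros_app, zeros_rep. unfold zeros at 1. simpl. fold (zeros (repeat true (b - 1 - o) ++ W b r os)).
    rewrite zeros_app, zeros_rep, IH. auto.
Qed.

Lemma W_nth b r : forall os j, (forall o, In o os -> o < b) -> j < length os ->
  nth (j * b + nth j os 0) (W b r os) false = false.
Proof.
  induction os as [|o os IH]; intros j H Hj; simpl in Hj; [lia|].
  assert (Ho : o < b) by (apply H; left; auto).
  destruct j as [|j].
  - simpl. rewrite app_nth2; rewrite repeat_length; [|lia]. rewrite Nat.sub_diag. reflexivity.
  - simpl W. rewrite app_comm_cons, app_assoc.
    rewrite app_nth2; rewrite length_app, repeat_length; simpl; rewrite repeat_length; [|nia].
    match goal with |- nth ?x _ _ = _ => replace x with (j * b + nth j os 0) by (simpl; nia) end.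
    apply IH; [intros; apply H; right; auto|lia].
Qed.

Lemma lower_count k m (Q : seed) : 1 <= k -> span Q <= m -> solves Q m k ->
  (m / k) ^ k <= (m - weight Q + 1) * (m - weight Q) ^ k.
Proof.
  intros Hk HsQ Hsol.
  set (b := m / k). set (s := length Q). set (e := m - weight Q).
  assert (Hkb : k * b <= m) by apply Nat.Div0.mul_div_le.
  assert (Hws : weight Q <= s) by apply filter_len_le.
  unfold span in HsQ. fold s in HsQ.
  set (cov := fun d z => (d <=? z) && (z - d <? s) && nth (z - d) Q false).
  set (U := fun i d o => negb (cov d (i * b + o))).
  set (D := seq 0 (m - s + 1)).
  assert (H1 : b ^ k <= list_sum (map (prodF U b 0 k) D)).
  { apply cover_count. intros os Hl Hb.
    set (w := W b (m - k * b) os).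
    assert (Hsim : similarity m k w).
    { split; [unfold w; rewrite W_len; auto; lia| unfold w; rewrite W_zeros; auto]. }
    destruct (Hsol w Hsim) as [j0 [Hj1 [Hj2 Hj3]]].
    unfold span in Hj2, Hj3. fold s in Hj2, Hj3.
    assert (Hlw : length w = m) by (destruct Hsim; auto).
    exists (j0 - 1). split; [unfold D; apply in_seq; lia|].
    intros j Hj. simpl. set (o := nth j os 0).
    assert (Hzero : nth (j * b + o) w false = false) by (unfold w, o; apply W_nth; auto; lia).
    unfold U, cov.
    destruct (j0 - 1 <=? j * b + o) eqn:E1; simpl; auto.
    destruct (j * b + o - (j0 - 1) <? s) eqn:E2; simpl; auto.
    destruct (nth (j * b + o - (j0 - 1)) Q false) eqn:E3; simpl; auto.
    exfalso. apply Nat.leb_le in E1. apply Nat.ltb_lt in E2.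
    specialize (Hj3 (j * b + o - (j0 - 1) + 1) ltac:(lia)).
    replace (j * b + o - (j0 - 1) + 1 - 1) with (j * b + o - (j0 - 1)) in Hj3 by lia.
    specialize (Hj3 E3).
    replace (j0 + (j * b + o - (j0 - 1) + 1) - 2) with (j * b + o) in Hj3 by lia.
    congruence. }
  assert (H2 : list_sum (map (prodF U b 0 k) D) <= length D * e ^ k).
  { apply sum_const_le. intros d Hd. unfold D in Hd. apply in_seq in Hd.
    apply prodF_le. intros j Hj. simpl.
    set (V := fun z => negb (cov d z)).
    assert (E1 : length (filter (U j d) (seq 0 b)) = cnt V (seq (0 + j * b) b)).
    { rewrite cnt_shift. apply cnt_ext. intros x _. unfold U, V. rewrite Nat.add_comm. reflexivity. }
    assert (E2 : cnt V (seq (0 + j * b) b) <= cnt V (seq 0 m)) by (apply cnt_sub; nia).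
    assert (E3 : cnt (cov d) (seq 0 m) + cnt V (seq 0 m) = m).
    { unfold cnt, V. rewrite filter_split, length_seq. auto. }
    assert (E4 : cnt (cov d) (seq (0 + d) s) <= cnt (cov d) (seq 0 m)) by (apply cnt_sub; lia).
    assert (E5 : cnt (cov d) (seq (0 + d) s) = weight Q).
    { rewrite cnt_shift. pose proof (cnt_nth_gen (fun b => b) false Q 0) as G.
      unfold weight. rewrite <- G. fold s. apply cnt_ext. intros x Hx. apply in_seq in Hx.
      unfold cov. replace (x + d - d) with x by lia. replace (x - 0) with x by lia.
      rewrite (proj2 (Nat.leb_le d (x + d))) by lia. rewrite (proj2 (Nat.ltb_lt x s)) by lia. reflexivity. }
    unfold e. lia. }
  unfold D in H2. rewrite length_seq in H2.
  assert (m - s + 1 <= e + 1) by (unfold e; lia).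
  assert (length D = m - s + 1) by (unfold D; apply length_seq).
  eapply Nat.le_trans; [exact H1|]. eapply Nat.le_trans; [exact H2|]. nia.
Qed.
Open Scope nat_scope.

Lemma max_exists (S : nat -> Prop) m : S 0 -> (forall n, S n -> n <= m) ->
  exists n, S n /\ forall n', S n' -> n' <= n.
Proof.
  intros H0 Hb.
  assert (G : forall c n, S n -> m - n <= c -> exists n, S n /\ forall n', S n' -> n' <= n).
  { induction c; intros n Hn Hc.
    - exists n. split; auto. intros n' Hn'. specialize (Hb _ Hn'). lia.
    - destruct (classic (exists n', S n' /\ n < n')) as [[n' [Hn' Hlt]]|Hno].
      + apply (IHc n' Hn'). specialize (Hb _ Hn'). lia.
      + exists n. split; auto. intros n' Hn'. destruct (le_lt_dec n' n); auto.
        exfalso; apply Hno; eauto. }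
  apply (G m 0 H0). lia.
Qed.

Lemma solves_nil m k : solves [] m k.
Proof. intros w [Hl _]. exists 1. unfold matches_at, span; simpl. split; [lia|]. split; [lia|]. intros; lia. Qed.

Lemma weight_le_span Q : weight Q <= span Q.
Proof. apply filter_len_le. Qed.

Lemma wmax_spec k m : is_max_solving_weight k m (wmax k m).
Proof.
  unfold wmax. apply epsilon_spec.
  destruct (max_exists (fun n => exists Q : seed, span Q <= m /\ solves Q m k /\ weight Q = n) m)
    as [n [Hn Hmax]].
  - exists []. split; [simpl; lia|]. split; [apply solves_nil|reflexivity].
  - intros n [Q [H1 [_ H3]]]. pose proof (weight_le_span Q). lia.
  - exists n. split; auto. intros Q H1 H2. apply Hmax. eauto.
Qed.

Lemma t_exists k : forall m, exists t, t ^ (S k) <= m < (t + 1) ^ (S k).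
Proof.
  induction m.
  - exists 0. rewrite Nat.pow_0_l by lia. rewrite Nat.add_0_l, Nat.pow_1_l. lia.
  - destruct IHm as [t [H1 H2]].
    destruct (Nat.eq_dec (S m) ((t + 1) ^ S k)) as [E|E].
    + exists (t + 1). split; [lia|]. rewrite E. apply Nat.pow_lt_mono_l; lia.
    + exists t. lia.
Qed.

Open Scope R_scope.

Lemma pow_lt_strict (a b : R) n : 0 <= a -> a < b -> (n >= 1)%nat -> a ^ n < b ^ n.
Proof.
  intros Ha Hab Hn. induction n; [lia|].
  destruct (Nat.eq_dec n 0) as [->|Hn0]; [simpl; lra|].
  simpl. assert (a ^ n < b ^ n) by (apply IHn; lia).
  assert (0 <= a ^ n) by (apply pow_le; auto). nra.
Qed.

Lemma pow_le_inv (a b : R) n : 0 <= a -> 0 <= b -> (n >= 1)%nat -> a ^ n <= b ^ n -> a <= b.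
Proof.
  intros Ha Hb Hn H. destruct (Rle_lt_dec a b); auto.
  pose proof (pow_lt_strict b a n Hb r Hn). lra.
Qed.
Open Scope R_scope.

Theorem mainTheorem8 (k : nat) (hk : (1 <= k)%nat) :
  exists c1 c2 : R, exists M : nat, 0 < c1 /\ 0 < c2 /\
    forall m : nat, (k <= m)%nat -> (M <= m)%nat ->
      c1 * Rpower (INR m) (INR k / INR (k + 1))
        <= INR m - INR (wmax k m)
        <= c2 * Rpower (INR m) (INR k / INR (k + 1)).
Proof.
  assert (HK : 1 <= INR k) by (replace 1 with (INR 1) by reflexivity; apply le_INR; lia).
  exists (1 / (4 * INR k)), (1 + 3 * INR k), (2 * k)%nat.
  split; [apply Rdiv_lt_0_compat; lra|]. split; [lra|].
  intros m Hkm HMm.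
  assert (Hmpos : 0 < INR m) by (apply lt_0_INR; lia).
  set (y := Rpower (INR m) (/ INR (k + 1))).
  assert (Hypos : 0 < y) by (unfold y, Rpower; apply exp_pos).
  assert (Hk1 : INR (k + 1) <> 0) by (apply not_0_INR; lia).
  assert (HyK : Rpower (INR m) (INR k / INR (k + 1)) = y ^ k).
  { rewrite <- Rpower_pow by auto. unfold y. rewrite Rpower_mult. f_equal. unfold Rdiv. ring. }
  assert (HyK1 : y ^ (k + 1) = INR m).
  { rewrite <- Rpower_pow by auto. unfold y. rewrite Rpower_mult. rewrite Rinv_l by auto. apply Rpower_1; auto. }
  rewrite HyK.
  destruct (wmax_spec k m) as [[Q0 [HQ0s [HQ0sol HQ0w]]] Hmax].
  assert (Hwm : (wmax k m <= m)%nat) by (pose proof (weight_le_span Q0); lia).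
  rewrite <- minus_INR by lia.
  set (Y := y ^ k).
  assert (HY0 : 0 <= Y) by (unfold Y; apply pow_le; lra).
  assert (HyY : y * Y = INR m) by (rewrite <- HyK1; unfold Y; rewrite Nat.add_1_r; reflexivity).
  split.
  - pose proof (lower_count k m Q0 hk HQ0s HQ0sol) as L. rewrite HQ0w in L.
    set (e := (m - wmax k m)%nat) in *. set (b := (m / k)%nat) in *.
    assert (Hb : (m <= 2 * k * b)%nat).
    { pose proof (Nat.div_mod_eq m k). pose proof (Nat.mod_upper_bound m k ltac:(lia)). nia. }
    assert (Hb1 : (1 <= b)%nat) by nia.
    assert (He1 : (1 <= e)%nat).
    { destruct e as [|e'] eqn:Ee; [|lia]. exfalso. rewrite Nat.pow_0_l in L by lia.
      pose proof (Nat.pow_le_mono_l 1 b k Hb1). rewrite Nat.pow_1_l in H. lia. }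
    apply le_INR in L. rewrite pow_INR, mult_INR, plus_INR, pow_INR in L. simpl INR in L.
    apply le_INR in Hb. rewrite !mult_INR in Hb. simpl INR in Hb.
    apply le_INR in He1. simpl INR in He1.
    set (E := INR e) in *. set (B := INR b) in *. set (K := INR k) in *.
    assert (HB : 0 <= B) by (unfold B; apply pos_INR).
    assert (Hpow : Y ^ (k + 1) <= (2 * K * (E + 1)) ^ (k + 1)).
    { assert (Y ^ (k + 1) = INR m ^ k).
      { unfold Y. rewrite <- pow_mult, Nat.mul_comm, pow_mult, HyK1. reflexivity. }
      rewrite H. rewrite (Rpow_mult_distr (2 * K) (E + 1)).
      assert (INR m ^ k <= (2 * K) ^ k * B ^ k).
      { rewrite <- Rpow_mult_distr. apply pow_incr. lra. }
      assert (B ^ k <= (E + 1) ^ (k + 1)).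
      { eapply Rle_trans; [exact L|]. rewrite Nat.add_1_r. simpl.
        apply Rmult_le_compat_l; [lra|]. apply pow_incr; lra. }
      assert ((2 * K) ^ k <= (2 * K) ^ (k + 1)) by (apply Rle_pow; [lra|lia]).
      assert (0 <= (2 * K) ^ k) by (apply pow_le; lra).
      assert (0 <= B ^ k) by (apply pow_le; lra).
      assert (0 <= (E + 1) ^ (k + 1)) by (apply pow_le; lra).
      eapply Rle_trans; [eassumption|].
      apply Rmult_le_compat; auto. }
    apply pow_le_inv in Hpow; [|lra|nra|lia].
    assert (Y <= 4 * K * E) by nra.
    apply Rle_trans with (1 / (4 * K) * (4 * K * E)).
    + apply Rmult_le_compat_l; [|lra]. apply Rlt_le, Rdiv_lt_0_compat; lra.
    + right. field. lra.
  - destruct (t_exists k m) as [t [Ht1 Ht2]].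
    assert (Ht : (1 <= t)%nat).
    { destruct t; [|lia]. rewrite Nat.add_0_l, Nat.pow_1_l in Ht2. lia. }
    assert (Htk : (t ^ k <= m)%nat).
    { pose proof (Nat.pow_le_mono_r t k (S k) ltac:(lia) ltac:(lia)). lia. }
    destruct (upper_con k m t hk Ht Htk) as [Q [HQs [HQsol [HQw HQb]]]].
    pose proof (Hmax Q HQs HQsol) as HQm.
    assert (HU : (t * (m - wmax k m) <= t * t ^ k + k * (m + t ^ k))%nat) by nia.
    apply le_INR in HU. rewrite !plus_INR, !mult_INR, !plus_INR, !pow_INR in HU.
    apply le_INR in Ht1. rewrite pow_INR in Ht1.
    apply lt_INR in Ht2. rewrite pow_INR, plus_INR in Ht2. simpl INR in Ht2.
    apply le_INR in Ht. simpl INR in Ht.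
    set (E := INR (m - wmax k m)) in *. set (T := INR t) in *. set (K := INR k) in *.
    replace (S k) with (k + 1)%nat in Ht1, Ht2 by lia.
    assert (HTy : T <= y).
    { apply (pow_le_inv T y (k + 1)); try lra; try lia. }
    assert (HyT : y <= 2 * T).
    { destruct (Rle_lt_dec y (T + 1)) as [Hl|Hl]; [lra|].
      exfalso. assert ((T + 1) ^ (k + 1) <= y ^ (k + 1)) by (apply pow_incr; lra). lra. }
    assert (HTkY : T ^ k <= Y) by (unfold Y; apply pow_incr; lra).
    assert (HTk0 : 0 <= T ^ k) by (apply pow_le; lra).
    assert (HmY : INR m <= 2 * T * Y) by nra.
    assert (HTk : T ^ k <= T * Y) by nra.
    assert (T * E <= T * ((1 + 3 * K) * Y)) by nra.
    apply Rmult_le_reg_l with T; lra.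
Qed.
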